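(* Let $k,m\in\mathbb{N}$ with $m<k\le 2m$, $k$ even, and $\gcd(2k+1,2(2m+1))=1$; let $a>0$ satisfy $\frac{1}{4km+3k+m+1}\le\frac{a}{2k+1}\le\frac{1}{4km+k+3m+1}$ and put $b=\frac{2k+1}{2a(2m+1)}$ and $Y=\frac{1}{2a(2m+1)}$. For $s=0,\dots,4m+1$, $n=0,\dots,2k$ define $X_{sn}=\frac{s}{2(2m+1)}-\frac{n}{2k+1}$, $\Phi_{sn}=\sum_{l\in\mathbb{Z}}Q_2\big(2a(2m+1)(l+X_{sn})\big)$ with $Q_2(x)=(1-|x|)\chi_{[-1,1]}(x)$, and $A_{sn}=\Phi_{sn}-\Phi_{s,2k+1-n}$ for $n=1,\dots,k$. Then for $s=1,\dots,m$ and $n=1,\dots,k/2$, $$A_{sn}=\begin{cases}2n/b,& 0<X_{sn}<Y,\\ 2as,& -Y<X_{sn}<0.\end{cases}$$ *)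

(* Defs.v *)
From Stdlib Require Import Reals Lra Lia Arith.
From Coquelicot Require Import Coquelicot.
Open Scope R_scope.

Definition Q2 (x : R) : R :=
  if Rle_dec (Rabs x) 1 then 1 - Rabs x else 0.

(* Sum over l in Z of f(l), as sum_{l>=0} f(l) + sum_{l>=1} f(-l). *)
Definition sumZ (f : Z -> R) : R :=
  Series (fun l : nat => f (Z.of_nat l)) + Series (fun l : nat => f (- Z.of_nat (S l))%Z).

Definition Xsn (k m s n : nat) : R :=
  INR s / (2 * (2 * INR m + 1)) - INR n / (2 * INR k + 1).

Definition Phi (k m : nat) (a : R) (s n : nat) : R :=
  sumZ (fun l => Q2 (2 * a * (2 * INR m + 1) * (IZR l + Xsn k m s n))).

Definition Asn (k m : nat) (a : R) (s n : nat) : R :=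
  Phi k m a s n - Phi k m a s (2 * k + 1 - n)%nat.

Definition bpar (m k : nat) (a : R) : R := (2 * INR k + 1) / (2 * a * (2 * INR m + 1)).
Definition Ypar (m : nat) (a : R) : R := 1 / (2 * a * (2 * INR m + 1)).

(* Main.v *)
Require Import Defs.
From Stdlib Require Import Reals Arith Lra Lia.
From Coquelicot Require Import Coquelicot.
Open Scope R_scope.

Lemma series_finite (f : nat -> R) N : (forall l, (N < l)%nat -> f l = 0) -> Series f = sum_n f N.
Proof.
  intro H. apply is_series_unique. unfold is_series.
  apply filterlim_ext_loc with (fun _ => sum_n f N).
  - exists N. intros n Hn. induction Hn. reflexivity.
    rewrite sum_Sn, <- IHHn, H by lia. symmetry; exact (Rplus_0_r _).
  - apply filterlim_const.
Qed.

Lemma Q2_zero y : 1 <= Rabs y -> Q2 y = 0.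
Proof. intro H. unfold Q2. destruct Rle_dec; lra. Qed.

Lemma Q2_pos y : 0 <= y <= 1 -> Q2 y = 1 - y.
Proof. intro H. unfold Q2. rewrite Rabs_right by lra. destruct Rle_dec; lra. Qed.
Lemma Q2_neg y : -1 <= y <= 0 -> Q2 y = 1 + y.
Proof. intro H. unfold Q2. rewrite Rabs_left1 by lra. destruct Rle_dec; lra. Qed.

Lemma sumZ0 c X : 0 < c -> 1 <= c * (1 + X) -> 1 <= c * (1 - X) ->
  sumZ (fun l => Q2 (c * (IZR l + X))) = Q2 (c * X).
Proof.
  intros Hc H1 H2. unfold sumZ.
  rewrite (series_finite _ 0), (series_finite _ 0).
  - rewrite !sum_O. simpl. rewrite Rplus_0_l. rewrite (Q2_zero (c * (-1 + X))). lra.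
    rewrite Rabs_left1; nra.
  - intros l Hl. apply Q2_zero. rewrite Rabs_left1.
    + rewrite opp_IZR, <- INR_IZR_INZ, S_INR. pose proof (pos_INR l). nra.
    + rewrite opp_IZR, <- INR_IZR_INZ, S_INR. pose proof (pos_INR l). nra.
  - intros l Hl. apply Q2_zero. rewrite <- INR_IZR_INZ. assert (1 <= INR l) by (replace 1 with (INR 1) by (simpl; lra); apply le_INR; lia).
    rewrite Rabs_right; nra.
Qed.

Lemma sumZ1 c X : 0 < c -> 1 <= c * (2 + X) -> 1 <= c * (- X) ->
  sumZ (fun l => Q2 (c * (IZR l + X))) = Q2 (c * (1 + X)).
Proof.
  intros Hc H1 H2. unfold sumZ.
  rewrite (series_finite _ 1), (series_finite _ 0).
  - rewrite sum_Sn, !sum_O. simpl. rewrite Rplus_0_l.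
    rewrite (Q2_zero (c * X)). rewrite (Q2_zero (c * (-1 + X))). unfold plus; simpl. lra.
    rewrite Rabs_left1; nra. rewrite Rabs_left1; nra.
  - intros l Hl. apply Q2_zero. rewrite Rabs_left1.
    + rewrite opp_IZR, <- INR_IZR_INZ, S_INR. pose proof (pos_INR l). nra.
    + rewrite opp_IZR, <- INR_IZR_INZ, S_INR. pose proof (pos_INR l). nra.
  - intros l Hl. apply Q2_zero. rewrite <- INR_IZR_INZ. 
    assert (2 <= INR l) by (replace 2 with (INR 2) by (simpl; lra); apply le_INR; lia).
    rewrite Rabs_right; nra.
Qed.

Theorem lemma3p4 (k m : nat) (a : R)
  (hmk : (m < k)%nat) (hkm : (k <= 2 * m)%nat) (hev : Nat.Even k)
  (hgcd : Nat.gcd (2 * k + 1) (2 * (2 * m + 1)) = 1%nat)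
  (ha : 0 < a)
  (hlow : 1 / (4 * INR k * INR m + 3 * INR k + INR m + 1) <= a / (2 * INR k + 1))
  (hup : a / (2 * INR k + 1) <= 1 / (4 * INR k * INR m + INR k + 3 * INR m + 1))
  (s n : nat) (hs1 : (1 <= s)%nat) (hs2 : (s <= m)%nat)
  (hn1 : (1 <= n)%nat) (hn2 : (n <= k / 2)%nat) :
  (0 < Xsn k m s n < Ypar m a -> Asn k m a s n = 2 * INR n / bpar m k a) /\
  (- Ypar m a < Xsn k m s n < 0 -> Asn k m a s n = 2 * a * INR s).
Proof.
  assert (h2n : (2 * n <= k)%nat) by (pose proof (Nat.Div0.mul_div_le k 2); lia).
  assert (HS1 : 1 <= INR s) by (replace 1 with (INR 1) by (simpl; lra); apply le_INR; lia).
  assert (HSM : INR s <= INR m) by (apply le_INR; lia).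
  assert (HN1 : 1 <= INR n) by (replace 1 with (INR 1) by (simpl; lra); apply le_INR; lia).
  assert (HNK : 2 * INR n <= INR k) by (replace (2 * INR n) with (INR (2 * n)) by (rewrite mult_INR; simpl; lra); apply le_INR; lia).
  assert (HMK : INR m + 1 <= INR k) by (rewrite <- S_INR; apply le_INR; lia).
  assert (HX2 : INR (2 * k + 1 - n) = 2 * INR k + 1 - INR n)
    by (rewrite minus_INR by lia; rewrite plus_INR, mult_INR; simpl; lra).
  set (K := INR k) in *. set (M := INR m) in *. set (S := INR s) in *. set (N := INR n) in *.
  assert (HM0 : 0 <= M) by (unfold M; apply pos_INR).
  set (q := 2 * K + 1) in *. set (p := 2 * M + 1) in *.
  assert (Hq : 0 < q) by (unfold q; lra). assert (Hp : 0 < p) by (unfold p; lra).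
  set (w := a / q) in *.
  assert (Ha : a = w * q) by (unfold w; field; lra).
  set (L := 4 * K * M + 3 * K + M + 1) in *.
  set (L' := 4 * K * M + K + 3 * M + 1) in *.
  assert (HL : 0 < L) by (unfold L; nra). assert (HL' : 0 < L') by (unfold L'; nra).
  assert (Hw : 0 < w) by (unfold w; apply Rdiv_lt_0_compat; lra).
  assert (hl : 1 <= w * L).
  { replace 1 with (1 / L * L) by (field; lra). apply Rmult_le_compat_r; lra. }
  assert (hu : w * L' <= 1).
  { replace 1 with (1 / L' * L') by (field; lra). apply Rmult_le_compat_r; lra. }
  set (c := 2 * a * (2 * M + 1)).
  set (u := S / (2 * p)). set (v := N / q).
  assert (Hcu : c * u = w * q * S) by (unfold c, u, p; rewrite Ha; field; lra).
  assert (Hcv : c * v = 2 * w * p * N) by (unfold c, v, p; rewrite Ha; unfold q; field; lra).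
  assert (Hc : c = 2 * w * q * p) by (unfold c, p; rewrite Ha; ring).
  assert (Hcp : 0 < c) by (rewrite Hc; apply Rmult_lt_0_compat; [|lra]; nra).
  assert (Hu0 : 0 < u) by (unfold u; apply Rdiv_lt_0_compat; lra).
  assert (Hv0 : 0 < v) by (unfold v; apply Rdiv_lt_0_compat; lra).
  assert (F2 : c * (u + v) <= 1).
  { rewrite Rmult_plus_distr_l, Hcu, Hcv.
    assert (w * (q * S + 2 * p * N) <= w * (q * M + p * K)) by (apply Rmult_le_compat_l; [lra|]; unfold p, q in *; nra).
    assert (w * (q * M + p * K) <= w * L') by (apply Rmult_le_compat_l; [lra|]; unfold p, q, L'; nra).
    lra. }
  assert (F3 : 1 <= c * (1 - u - v)).
  { replace (c * (1 - u - v)) with (c - c * u - c * v) by ring. rewrite Hcu, Hcv, Hc.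
    assert (w * (q * S + 2 * p * N) <= w * (q * M + p * K)) by (apply Rmult_le_compat_l; [lra|]; unfold p, q in *; nra).
    assert (w * L <= w * (2 * q * p - (q * M + p * K))) by (apply Rmult_le_compat_l; [lra|]; unfold p, q, L; nra).
    lra. }
  assert (EX : Xsn k m s n = u - v) by reflexivity.
  assert (EX2 : Xsn k m s (2 * k + 1 - n) = - (1 - u - v)).
  { unfold Xsn. rewrite HX2. fold S K M. unfold u, v, p, q. field. lra. }
  assert (EA : Asn k m a s n = Q2 (c * (u - v)) - Q2 (c * (1 - (1 - u - v)))).
  { unfold Asn, Phi. fold M c. rewrite sumZ0, sumZ1; rewrite ?EX, ?EX2; try lra; try nra.
    all: repeat f_equal; ring.  }
  assert (EY : Ypar m a = 1 / c) by reflexivity.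
  rewrite EA, EX, EY. split; intros [H1 H2].
  - rewrite Q2_pos, Q2_pos.
    + unfold bpar. fold K M q. replace (2 * N / (q / (2 * a * (2 * M + 1)))) with (2 * N * c / q)
        by (unfold c; field; split; lra).
      replace (2 * N * c / q) with (2 * (c * v)) by (unfold v; field; lra). ring.
    + split; nra.
    + split. nra. apply (Rmult_lt_compat_l c) in H2; [|lra]. 
      replace (c * (1 / c)) with 1 in H2 by (field; lra). lra.
  - rewrite (Q2_neg (c * (u - v))), (Q2_pos (c * (1 - (1 - u - v)))).
    + replace (2 * a * S) with (2 * (c * u)) by (rewrite Hcu, Ha; ring). ring.
    + split; nra.
    + split. 2: nra. apply (Rmult_lt_compat_l c) in H1; [|lra].
      replace (c * - (1 / c)) with (-1) in H1 by (field; lra). lra.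
Qed.
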